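(* Consider the protocol $\Pi_{(t+1,n)}$ described in the context, with $1\le t$ and $n>2t$, run on an automaton $\mathcal{A}=(ST,\Sigma,\mu)$ with states $s_1,\dots,s_m$ from initial state $s_{\mathrm{init}}$. Then for every $r\ge 0$, after the $r$-th clock tick has been processed, and for every $j\in\{1,\dots,m\}$, there is a polynomial $Q_j$ over $\mathbb{F}$ of degree at most $t$ such that $\ell^i_j=Q_j(i)$ for all $i=1,\dots,n$, and $Q_j(0)=1$ if $s_j$ is the state reached by $\mathcal{A}$ from $s_{\mathrm{init}}$ on the input symbols received during ticks $1,\dots,r$, while $Q_j(0)=0$ otherwise. Consequently, the labels of any $t+1$ agents determine (by Lagrange interpolation at $0$) all the values $Q_j(0)$, and hence the current state of $\mathcal{A}$.
   Context: A finite-state automaton $\mathcal{A}$ has finite state set $ST=\{s_1,\dots,s_m\}$, finite alphabet $\Sigma$ and transition function $\mu:ST\times\Sigma\to ST$. Time proceeds in global clock ticks $r=1,2,\dots$; at each tick at most one input symbol arrives (simultaneously to all agents), possibly none. Protocol $\Pi_{(t+1,n)}$. Let $\mathbb{F}$ be a finite field with $|\mathbb{F}|>n$, and identify agent indices $1,\dots,n$ with distinct nonzero elements of $\mathbb{F}$. Let $G:\{0,1\}^{len}\to\mathbb{F}^m\times\{0,1\}^{len}$, writing $G(x)=(b_1,\dots,b_m)\|S$. Let $\mathcal{T}$ be the family of all subsets of $\{A_1,\dots,A_n\}$ of size $n-t+1$. Initialization: for each $j$ the dealer picks a uniformly random polynomial $f_j$ over $\mathbb{F}$ of degree at most $t$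 with $f_j(0)=1$ if $j=\mathrm{init}$ and $f_j(0)=0$ otherwise (Shamir sharing), and agent $A_i$ sets $\ell^i_j:=f_j(i)$. For each $T\in\mathcal{T}$ the dealer picks a uniform seed $\mathrm{seed}^T\in\{0,1\}^{len}$ and gives it to every agent in $T$. Event processing (at every tick): each agent $A_i$ (1) if a symbol $\gamma$ arrived, replaces simultaneously for all $j$: $\ell^i_j:=\sum_{k:\,\mu(s_k,\gamma)=s_j}\ell^i_k$ (sum in $\mathbb{F}$; empty sum $=0$); (2) for each $T\in\mathcal{T}$ with $A_i\in T$, computes $G(\mathrm{seed}^T)=(b^T_1,\dots,b^T_m)\|S^T$ and replaces $\mathrm{seed}^T$ by $S^T$ (erasing the old seed); (3) for each $j$ sets $\ell^i_j:=\ell^i_j+\sum_{T\in\mathcal{T},\,A_i\in T}P^T_j(i)$, where $P^T_j$ is the unique polynomial of degree at most $t$ with $P^T_j(0)=0$, $P^T_j(a)=0$ for every index $a$ with $A_a\notin T$ (there are $t-1$ such), and $P^T_j(k_T)=b^T_j$ where $k_T$ is the minimal index of an agent in $T$. Reconstruction: at least $t+1$ agents submit their labels; for each $j$ the dealer interpolates the degree-$\le t$ polynomial through their points $(i,\ell^i_j)$, evaluates it at $0$, and outputs the state whose value is $1$. *)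

(* Defs.v *)
From HB Require Import structures.
From mathcomp Require Import all_boot all_order all_algebra.
Set Implicit Arguments. Unset Strict Implicit. Unset Printing Implicit Defensive.
Import GRing.Theory.
Local Open Scope ring_scope.

Definition seed (len : nat) := (len.-tuple bool)%type.

Section Protocol.
Variables (F : fieldType) (n m t len : nat) (Sigma : Type).
Variable mu : 'I_m -> Sigma -> 'I_m.
Variable idx : 'I_n -> F.
Variable G : seed len -> {ffun 'I_m -> F} * seed len.
(* P T b = the polynomial P^T_j when b = b^T_j *)
Variable P : {set 'I_n} -> F -> {poly F}.

Definition inFam (T : {set 'I_n}) : bool := #|T| == (n - t + 1)%N.

(* Local configuration of all agents: labels l^i_j and the seeds seed^T held by agent i *)
Record config := Config {
  lab : 'I_n -> 'I_m -> F;
  sd  : 'I_n -> {set 'I_n} -> seed len }.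

Definition update_labels (c : config) (g : option Sigma) : 'I_n -> 'I_m -> F :=
  fun i j => match g with
             | None => lab c i j
             | Some gam => \sum_(k : 'I_m | mu k gam == j) lab c i k
             end.

Definition step (c : config) (g : option Sigma) : config :=
  Config
    (fun i j => update_labels c g i j +
        \sum_(T : {set 'I_n} | inFam T && (i \in T)) (P T ((G (sd c i T)).1 j)).[idx i])
    (fun i T => if inFam T && (i \in T) then (G (sd c i T)).2 else sd c i T).

(* Run of the protocol: inp r is the symbol (if any) arriving at tick r >= 1 *)
Fixpoint run (c0 : config) (inp : nat -> option Sigma) (r : nat) : config :=
  match r with
  | 0 => c0
  | r'.+1 => step (run c0 inp r') (inp r)
  end.

Fixpoint astate (s0 : 'I_m) (inp : nat -> option Sigma) (r : nat) : 'I_m :=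
  match r with
  | 0 => s0
  | r'.+1 => match inp r with
             | None => astate s0 inp r'
             | Some gam => mu (astate s0 inp r') gam
             end
  end.

Definition init_config (f : 'I_m -> {poly F}) (seed0 : {set 'I_n} -> seed len) : config :=
  Config (fun i j => (f j).[idx i]) (fun i T => seed0 T).

Definition interp0 (S : {set 'I_n}) (y : 'I_n -> F) : F :=
  \sum_(i in S) y i * \prod_(k in S | k != i) ((0 - idx k) / (idx i - idx k)).

End Protocol.

(* Main.v *)
Require Import Defs.
From HB Require Import structures.
From mathcomp Require Import all_boot all_order all_algebra.
Import GRing.Theory.
Local Open Scope ring_scope.

Lemma size_le_add (F : fieldType) (N : nat) (p q : {poly F}) :
  (size p <= N)%N -> (size q <= N)%N -> (size (p + q)%R <= N)%N.
Proof. by move=> hp hq; apply: leq_trans (size_polyD _ _) _; rewrite geq_max hp hq. Qed.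

Definition Fk {F : fieldType} {n} (idx : 'I_n -> F) (i k : 'I_n) : {poly F} :=
  ('X - (idx k)%:P) * ((idx i - idx k)^-1)%:P.
Definition lagr {F : fieldType} {n} (idx : 'I_n -> F) (S : {set 'I_n}) (Q : {poly F}) : {poly F} :=
  \sum_(i in S) Q.[idx i]%:P * \prod_(k | (k \in S) && (k != i)) Fk idx i k.

Lemma hprod {F : fieldType} {n} (S : {set 'I_n}) (idx : 'I_n -> F) i x :
  (\prod_(k | (k \in S) && (k != i)) Fk idx i k).[x] =
  \prod_(k | (k \in S) && (k != i)) (Fk idx i k).[x].
Proof. by rewrite horner_prod. Qed.

Lemma lagr_horner {F : fieldType} {n} (idx : 'I_n -> F) (S : {set 'I_n}) (Q : {poly F}) x :
  (lagr idx S Q).[x] = \sum_(i in S) Q.[idx i] * \prod_(k | (k \in S) && (k != i)) (Fk idx i k).[x].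
Proof.
rewrite /lagr horner_sum.
by under eq_bigr => i _ do rewrite hornerCM horner_prod.
Qed.

Lemma interp_ok (F : fieldType) n (idx : 'I_n -> F) (S : {set 'I_n}) (Q : {poly F}) :
  injective idx -> (size Q <= #|S|)%N ->
  interp0 idx S (fun i => Q.[idx i]) = Q.[0].
Proof.
move=> inj hQ.
set L := lagr idx S Q.
have L0 : L.[0] = interp0 idx S (fun i => Q.[idx i]).
  rewrite /L lagr_horner /interp0; apply: eq_bigr => i _.
  congr (_ * _); apply: eq_bigr => k _.
  by rewrite /Fk hornerM hornerC hornerXsubC.
have Ll : forall l, l \in S -> L.[idx l] = Q.[idx l].
  move=> l lS; rewrite /L lagr_horner (bigD1 l) //=.
  rewrite [X in _ + X]big1 ?addr0.
    rewrite big1 ?mulr1 // => k /andP[_ kl].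
    rewrite /Fk hornerM hornerC hornerXsubC mulfV // subr_eq0.
    by apply: contra kl => /eqP /inj ->.
  move=> i /andP[_ il]; rewrite (bigD1 l) /=; last by rewrite lS eq_sym.
  by rewrite /Fk hornerM hornerXsubC subrr !mul0r mulr0.
have sL : (size L <= #|S|)%N.
  rewrite /L /lagr; apply: (big_ind (fun p : {poly F} => (size p <= #|S|)%N)).
  - by rewrite size_poly0.
  - exact: size_le_add.
  move=> i iS; apply: leq_trans (size_polyMleq _ _) _.
  have sp : size (\prod_(k | (k \in S) && (k != i)) Fk idx i k) = #|S|.
    rewrite size_prod; last first.
      move=> k /andP[_ ki]; rewrite /Fk mulf_neq0 ?polyXsubC_eq0 // polyC_eq0 invr_eq0 subr_eq0.
      by apply: contra ki => /eqP /inj ->.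
    rewrite (eq_bigr (fun _ => 2%N)); last first.
      move=> k /andP[_ ki]; rewrite /Fk mulrC size_Cmul ?size_XsubC // invr_eq0 subr_eq0.
      by apply: contra ki => /eqP /inj ->.
    rewrite sum_nat_const.
    set c := #|_|.
    have -> : ((c * 2).+1 - c)%N = c.+1 by rewrite muln2 -addnn -addSn addnK.
    have : c = #|S :\ i|.
      by apply: eq_card => k; rewrite !inE andbC.
    by move->; rewrite (cardsD1 i S) iS.
  rewrite sp; have := size_polyC_leq1 (Q.[idx i]).
  by rewrite -subn1 leq_subLR leq_add2r.
have : Q - L = 0.
  apply: (@roots_geq_poly_eq0 _ _ [seq idx i | i <- enum S]).
  - apply/allP => y /mapP[z]; rewrite mem_enum => zS ->.
    by rewrite /root hornerD hornerN Ll // subrr.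
  - by rewrite map_inj_uniq ?enum_uniq.
  rewrite size_map -cardE; apply: leq_trans (size_polyD _ _) _.
  by rewrite size_polyN geq_max hQ sL.
by move/eqP; rewrite subr_eq0 => /eqP QL; rewrite -L0 -QL.
Qed.

Lemma interp0_ext {F : fieldType} {n} (idx : 'I_n -> F) S (y y' : 'I_n -> F) :
  (forall i, y i = y' i) -> interp0 idx S y = interp0 idx S y'.
Proof. by move=> h; rewrite /interp0; apply: eq_bigr => i _; rewrite h. Qed.

Lemma sum_indic {F : fieldType} {m} (p : pred 'I_m) (s : 'I_m) :
  \sum_(k | p k) ((k == s)%:R : F) = (p s)%:R.
Proof.
case ps: (p s).
  rewrite (bigD1 s) //= eqxx big1 ?addr0 // => k /andP[_ ks].
  by rewrite (negbTE ks).
rewrite big1 // => k pk; case: eqP => // ks; by rewrite -ks pk in ps.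
Qed.
Theorem proposition3
  (F : finFieldType) (n m t len : nat) (Sigma : finType)
  (mu : 'I_m -> Sigma -> 'I_m) (init : 'I_m)
  (idx : 'I_n -> F)
  (G : seed len -> {ffun 'I_m -> F} * seed len)
  (P : {set 'I_n} -> F -> {poly F})
  (f : 'I_m -> {poly F}) (seed0 : {set 'I_n} -> seed len)
  (inp : nat -> option Sigma) :
  (1 <= t)%N -> (2 * t < n)%N -> (n < #|F|)%N ->
  injective idx -> (forall i, idx i != 0) ->
  (* Shamir sharing of the initial state *)
  (forall j, (size (f j) <= t.+1)%N /\ (f j).[0] = (j == init)%:R) ->
  (* P T b is the polynomial P^T_j (with b = b^T_j) of the protocol *)
  (forall (T : {set 'I_n}) (b : F), @inFam n t T ->
     [/\ (size (P T b) <= t.+1)%N,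
         (P T b).[0] = 0,
         (forall a, a \notin T -> (P T b).[idx a] = 0) &
         (forall k, k \in T -> (forall a, a \in T -> (k <= a)%N) ->
            (P T b).[idx k] = b)]) ->
  forall r : nat,
    let c := @run F n m t len Sigma mu idx G P (init_config idx f seed0) inp r in
    (forall j : 'I_m, exists Q : {poly F},
       [/\ (size Q <= t.+1)%N,
           (forall i : 'I_n, lab c i j = Q.[idx i]) &
           Q.[0] = (j == astate mu init inp r)%:R])
    /\
    (forall S : {set 'I_n}, #|S| = t.+1 ->
       forall j : 'I_m, interp0 idx S (fun i => lab c i j) = (j == astate mu init inp r)%:R).
Proof.
move=> t1 t2n nF inj idx0 hf hP.
have inv : forall r,
  let c := @run F n m t len Sigma mu idx G P (init_config idx f seed0) inp r in
  (exists gs : {set 'I_n} -> seed len, forall i T, @inFam n t T -> i \in T -> sd c i T = gs T) /\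
  (exists Qf : 'I_m -> {poly F}, forall j, [/\ (size (Qf j) <= t.+1)%N,
      (forall i, lab c i j = (Qf j).[idx i]) & (Qf j).[0] = (j == astate mu init inp r)%:R]).
  elim=> [|r [[gs Hgs] [Qf HQ]]].
    split; first by exists seed0.
    by exists f => j; have [h1 h2] := hf j; split.
  split.
    exists (fun T => (G (gs T)).2) => i T hT iT /=.
    by rewrite hT iT /= Hgs.
  pose U j : {poly F} := match inp r.+1 with
     | None => Qf j | Some gam => \sum_(k | mu k gam == j) Qf k end.
  exists (fun j => U j + \sum_(T | @inFam n t T) P T ((G (gs T)).1 j)) => j.
  split.
  - apply: size_le_add.
      rewrite /U; case: (inp r.+1) => [gam|]; last by have [] := HQ j.
      apply: (big_ind (fun p : {poly F} => (size p <= t.+1)%N)).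
      + by rewrite size_poly0.
      + exact: size_le_add.
      by move=> k _; have [] := HQ k.
    apply: (big_ind (fun p : {poly F} => (size p <= t.+1)%N)).
    + by rewrite size_poly0.
    + exact: size_le_add.
    by move=> T hT; have [] := hP T ((G (gs T)).1 j) hT.
  - move=> i /=; rewrite hornerD; congr (_ + _).
      rewrite /update_labels /U; case: (inp r.+1) => [gam|]; last by have [] := HQ j.
      rewrite horner_sum; apply: eq_bigr => k _; by have [] := HQ k.
    rewrite horner_sum [RHS](bigID (fun T : {set 'I_n} => i \in T)) /= [X in _ + X]big1 ?addr0.
      apply: eq_bigr => T /andP[hT iT]; by rewrite Hgs.
    move=> T /andP[hT iT]; by have [_ _ H3 _] := hP T ((G (gs T)).1 j) hT; rewrite H3.
  - rewrite hornerD horner_sum big1 ?addr0; last first.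
      by move=> T hT; have [_ -> _ _] := hP T ((G (gs T)).1 j) hT.
    rewrite /U /=; case: (inp r.+1) => [gam|]; last by have [] := HQ j.
    rewrite horner_sum.
    rewrite (eq_bigr (fun k => ((k == astate mu init inp r)%:R : F))); last first.
      by move=> k _; have [] := HQ k.
    by rewrite sum_indic eq_sym.
move=> r c.
have [_ [Qf HQ]] := inv r.
split.
  by move=> j; exists (Qf j); have [] := HQ j.
move=> S hS j; have [h1 h2 h3] := HQ j.
rewrite (@interp0_ext _ _ idx S _ (fun i => (Qf j).[idx i])) //.
by rewrite interp_ok // hS.
Qed.
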